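(* Every graph of pathwidth at most $1$ and order $n$ has at most $2^{n/2}$ minimal dominating sets. The bound is attained by the path on $2$ vertices.
   Context: A dominating set of $G=(V,E)$ is a set $D\subseteq V$ such that every vertex outside $D$ has a neighbour in $D$; it is minimal if no proper subset is dominating. Order = number of vertices; pathwidth is the standard notion. *)

(* Defs.v *)
From HB Require Import structures.
From mathcomp Require Import all_boot.
Set Implicit Arguments. Unset Strict Implicit. Unset Printing Implicit Defensive.

Definition simple_graph (T : finType) (e : rel T) : Prop :=
  symmetric e /\ irreflexive e.

Definition dominating (T : finType) (e : rel T) (D : {set T}) : bool :=
  [forall v, (v \notin D) ==> [exists u, (u \in D) && e v u]].

Definition minimal_dominating (T : finType) (e : rel T) (D : {set T}) : bool :=
  dominating e D && [forall D' : {set T}, (D' \proper D) ==> ~~ dominating e D'].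

Definition mds (T : finType) (e : rel T) : {set {set T}} :=
  [set D : {set T} | minimal_dominating e D].

Definition path_decomposition (T : finType) (e : rel T) (s : seq {set T}) : Prop :=
  (forall v : T, exists2 B, B \in s & v \in B) /\
  (forall u v : T, e u v -> exists2 B, B \in s & (u \in B) && (v \in B)) /\
  (forall (v : T) (i j k : nat), i <= j -> j <= k -> k < size s ->
      v \in nth set0 s i -> v \in nth set0 s k -> v \in nth set0 s j).

Definition decomposition_width_le (T : finType) (s : seq {set T}) (w : nat) : Prop :=
  forall B, B \in s -> #|B| <= w.+1.

Definition pathwidth_le (T : finType) (e : rel T) (w : nat) : Prop :=
  exists s : seq {set T}, path_decomposition e s /\ decomposition_width_le s w.

Definition P2 : rel 'I_2 := fun i j => i != j.

(* Main.v *)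
Require Import Defs.
From HB Require Import structures.
From mathcomp Require Import all_boot.
From mathcomp Require Import zify.
Set Implicit Arguments. Unset Strict Implicit. Unset Printing Implicit Defensive.

Module A.

Section Gen.
Variable T : finType.
Variable e : rel T.
Hypothesis esymm : symmetric e.
Hypothesis eirr : irreflexive e.

Definition nb (v u : T) := (v == u) || e v u.
Definition domb (N D : {set T}) := [forall v in N, [exists u in D, nb v u]].
Definition privb (N D : {set T}) z := [exists w in N, [forall u in D, nb w u == (u == z)]].
Definition sol (V N : {set T}) :=
  [set D : {set T} | [&& D \subset V, domb N D & [forall z in D, privb N D z]]].

Lemma nbC v u : nb v u = nb u v.
Proof. by rewrite /nb eq_sym esymm. Qed.

Lemma nbxx v : nb v v.
Proof. by rewrite /nb eqxx. Qed.

Lemma solP (V N D : {set T}) : reflect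
  [/\ D \subset V, (forall v, v \in N -> exists2 u, u \in D & nb v u) &
      (forall z, z \in D -> exists2 w, w \in N & forall u, u \in D -> nb w u = (u == z))]
  (D \in sol V N).
Proof.
rewrite inE; apply: (iffP and3P) => [[HV /forallP Hd /forallP Hp]|[HV Hd Hp]]; split => //.
- move=> v vN; have /existsP[u /andP[uD nvu]] := implyP (Hd v) vN; by exists u.
- move=> z zD; have /existsP[w /andP[wN /forallP Hw]] := implyP (Hp z) zD.
  exists w => // u uD; exact/eqP/(implyP (Hw u) uD).
- apply/forallP => v; apply/implyP => vN; have [u uD nvu] := Hd v vN.
  by apply/existsP; exists u; rewrite uD.
- apply/forallP => z; apply/implyP => zD; have [w wN Hw] := Hp z zD.
  apply/existsP; exists w; rewrite wN; apply/forallP => u; apply/implyP => uD.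
  by rewrite Hw.
Qed.

Lemma restrict (V N V' N' X D : {set T}) : D \in sol V N -> X \subset D -> D :\: X \subset V' ->
  N' \subset N ->
  (forall v u, v \in N' -> u \in X -> ~~ nb v u) ->
  (forall w, w \in N -> w \notin N' -> exists2 u, u \in X & nb w u) ->
  D :\: X \in sol V' N'.
Proof.
move=> /solP[HV Hd Hp] XD DV' N'N Hi Hii; apply/solP; split => //.
- move=> v vN'; have [u uD nvu] := Hd v (subsetP N'N v vN').
  exists u => //; rewrite inE uD andbT; apply/negP => uX.
  by move: (Hi v u vN' uX); rewrite nvu.
- move=> z; rewrite inE => /andP[zX zD]; have [w wN Hw] := Hp z zD.
  exists w.
  + case: (boolP (w \in N')) => // wN'; have [u uX nwu] := Hii w wN wN'.
    move: (Hw u (subsetP XD u uX)); rewrite nwu => /esym/eqP Euz.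
    by move: zX; rewrite -Euz uX.
  + by move=> u; rewrite inE => /andP[_ uD]; apply: Hw.
Qed.

Lemma part_le (S S' : {set {set T}}) (X : {set T}) :
  (forall D, D \in S -> X \subset D /\ D :\: X \in S') -> #|S| <= #|S'|.
Proof.
move=> H; rewrite -(@card_in_imset _ _ (fun D => D :\: X) S).
  apply: subset_leq_card; apply/subsetP => _ /imsetP[D DS ->]; exact: (H D DS).2.
move=> D1 D2 /H[H1 _] /H[H2 _] E.
by rewrite -(setID D1 X) -(setID D2 X) (setIidPr H1) (setIidPr H2) E.
Qed.

Lemma split_le (S : {set {set T}}) (P : pred {set T}) :
  #|S| = #|[set D in S | P D]| + #|[set D in S | ~~ P D]|.
Proof.
rewrite -(cardsID [set D | P D] S); congr (_ + _); apply: eq_card => D;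
by rewrite !inE // andbC.
Qed.

End Gen.

End A.
Import A.

Module B.

Section Dec.
Variable T : finType.
Variable e : rel T.
Hypothesis esymm : symmetric e.
Hypothesis eirr : irreflexive e.
Variable s : seq {set T}.
Local Notation B i := (nth set0 s i).
Hypothesis Hedge : forall u v, e u v -> exists i, (u \in B i) && (v \in B i).
Hypothesis Hcont : forall v i j k, i <= j -> j <= k -> k < size s ->
      v \in B i -> v \in B k -> v \in B j.
Hypothesis Hsz : forall i, #|B i| <= 2.

Definition noniso (W : {set T}) v := [exists u in W, e v u].
Definition Inv (W : {set T}) f := forall v i, v \in W -> noniso W v -> v \in B i ->
   exists2 j, j <= i & f \in B j.
Definition nonleaf (W : {set T}) y z := exists2 w, w \in W & (w != y) && e z w.

Lemma inB_size v i : v \in B i -> i < size s.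
Proof. by case: (ltnP i (size s)) => // H; rewrite nth_default // inE. Qed.

Lemma two_bag i a b c : a \in B i -> b \in B i -> c \in B i -> a != b -> c = a \/ c = b.
Proof.
move=> aB bB cB ab; case: (eqVneq c a) => [->|ca]; first by left.
case: (eqVneq c b) => [->|cb]; first by right.
have : #|c |: (a |: [set b])| <= #|B i|.
  apply: subset_leq_card; apply/subsetP => z; rewrite !inE.
  by case/or3P => /eqP->.
rewrite !cardsU1 cards1 !inE negb_or ca cb ab /=.
by move: (Hsz i) => H1 H2; have := leq_trans H2 H1.
Qed.

Definition lastb v p := (v \in B p) && [forall k : 'I_(size s), (v \in B k) ==> (k <= p)].

Lemma lastP v p : lastb v p -> v \in B p /\ forall k, v \in B k -> k <= p.
Proof.
case/andP => vp /forallP H; split => // k vk.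
exact: (implyP (H (Ordinal (inB_size vk))) vk).
Qed.

Lemma last_ex v i : v \in B i -> exists p, lastb v p.
Proof.
move=> vi.
have exP : exists n, v \in B n by exists i.
have ubP : forall n, v \in B n -> n <= size s by move=> n /inB_size/ltnW.
case: (ex_maxnP exP ubP) => p vp Hp; exists p; rewrite /lastb vp /=.
by apply/forallP => k; apply/implyP => /Hp.
Qed.

Lemma noniso_sub (W V : {set T}) v : W \subset V -> noniso W v -> noniso V v.
Proof.
move=> WV /existsP[u /andP[uW evu]]; apply/existsP; exists u.
by rewrite (subsetP WV u uW).
Qed.

Lemma config (V : {set T}) v0 : v0 \in V -> noniso V v0 -> exists x y,
  [/\ x \in V, y \in V, e x y, (forall z, z \in V -> e x z -> z = y) &
   (forall z1 z2, z1 \in V -> z2 \in V -> e y z1 -> e y z2 ->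
        nonleaf V y z1 -> nonleaf V y z2 -> z1 = z2)] /\
  [/\ (forall f, f \in V -> noniso V f -> Inv V f -> f = x \/ f = y),
   (forall (W : {set T}) r, W \subset V -> x \notin W -> y \notin W -> r \in W -> e y r ->
        nonleaf V y r -> Inv W r) &
   Inv (V :\ x) y].
Proof.
move=> v0V nv0.
pose Pm p := [exists v in V, noniso V v && lastb v p].
have lastPm : forall v i, v \in V -> noniso V v -> v \in B i ->
    exists2 q, Pm q & lastb v q.
  move=> v i vV nv vi; have [q lq] := last_ex vi; exists q => //.
  by apply/existsP; exists v; rewrite vV nv.
have exP : exists p, Pm p.
  case/existsP: (nv0) => u /andP[uV eu].
  move: (Hedge eu) => [i /andP[v0i _]].
  by have [q Pq _] := lastPm v0 i v0V nv0 v0i; exists q.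
case: (find_ex_minn exP) => p /existsP[x /and3P[xV nx lx]] pmin.
have [xBp lxk] := lastP lx.
have Fact1 : forall v i, v \in V -> noniso V v -> i <= p -> v \in B i -> v \in B p.
  move=> v i vV nv ip vi; have [q Pq lq] := lastPm v i vV nv vi.
  have [vq _] := lastP lq; have pq := pmin q Pq.
  exact: (Hcont ip pq (inB_size vq) vi vq).
have nonisoE : forall a b, a \in V -> b \in V -> e a b -> noniso V a.
  by move=> a b aV bV eab; apply/existsP; exists b; rewrite bV.
case/existsP: (nx) => y /andP[yV exy].
have eyx : e y x by rewrite esymm.
have xny : x != y by apply/negP => /eqP E; move: exy; rewrite E eirr.
have yBp : y \in B p.
  have [i /andP[xi yi]] := Hedge exy.
  exact: (Fact1 y i yV (nonisoE _ _ yV xV eyx) (lxk i xi) yi).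
have bagxy : forall v, v \in B p -> v = x \/ v = y.
  by move=> v vB; apply: (two_bag xBp yBp vB xny).
have xleaf : forall z, z \in V -> e x z -> z = y.
  move=> z zV exz; have [i /andP[xi zi]] := Hedge exz.
  have ezx : e z x by rewrite esymm.
  case: (bagxy z (Fact1 z i zV (nonisoE _ _ zV xV ezx) (lxk i xi) zi)) => // E.
  by move: exz; rewrite E eirr.
have [q lqy] := last_ex yBp.
have [yBq lyk] := lastP lqy.
have pq : p <= q by apply: lyk.
have qs : q < size s by apply: (inB_size yBq).
have ymid : forall j, p <= j -> j <= q -> y \in B j.
  by move=> j pj jq; apply: (Hcont pj jq qs yBp yBq).
have nlB : forall z, z \in V -> e y z -> nonleaf V y z -> z \in B q.
  move=> z zV eyz [w wV /andP[wy ezw]].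
  have [j /andP[yj zj]] := Hedge eyz.
  have [qz lqz] := last_ex zj; have [zBqz lzk] := lastP lqz.
  case: (leqP q qz) => qqz.
    exact: (Hcont (lyk j yj) qqz (inB_size zBqz) zj zBqz).
  have [k /andP[zk wk]] := Hedge ezw.
  have kqz := lzk k zk.
  have ezy : e z y by rewrite esymm.
  case: (leqP k p) => kp.
    case: (bagxy z (Fact1 z k zV (nonisoE _ _ zV yV ezy) kp zk)) => E.
      by move: ezw; rewrite E => /(xleaf w wV) /eqP; rewrite (negbTE wy).
    by move: eyz; rewrite E eirr.
  have yk : y \in B k by apply: ymid; [exact: ltnW | exact: ltnW (leq_ltn_trans kqz qqz)].
  have yz : y != z by apply/negP => /eqP E; move: eyz; rewrite E eirr.
  case: (two_bag yk zk wk yz) => E; first by move: wy; rewrite E eqxx.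
  by move: ezw; rewrite E eirr.
exists x, y; split; split => //.
- move=> z1 z2 z1V z2V e1 e2 n1 n2.
  have yz1 : y != z1 by apply/negP => /eqP E; move: e1; rewrite E eirr.
  case: (two_bag yBq (nlB z1 z1V e1 n1) (nlB z2 z2V e2 n2) yz1) => // E.
  by move: e2; rewrite E eirr.
- move=> f fV nf If; have [j jp fj] := If x p xV nx xBp.
  exact: (bagxy f (Fact1 f j fV nf jp fj)).
- move=> W r WV xW yW rW eyr nlr v i vW nvW vi.
  have vV := subsetP WV v vW; have nv := noniso_sub WV nvW.
  have rq := nlB r (subsetP WV r rW) eyr nlr.
  case: (leqP q i) => qi; first by exists q.
  case: (boolP (v \in B q)) => vq.
    have yr : y != r by apply/negP => /eqP E; move: eyr; rewrite E eirr.
    case: (two_bag yBq rq vq yr) => E; first by move: yW; rewrite -E vW.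
    by exists i; rewrite // -E.
  case/existsP: nvW => u /andP[uW evu].
  have [k /andP[vk uk]] := Hedge evu.
  have kq : k < q.
    case: (ltnP k q) => // qk; case/negP: vq.
    exact: (Hcont (ltnW qi) qk (inB_size vk) vi vk).
  have pk : p < k.
    case: (ltnP p k) => // kp; have := bagxy v (Fact1 v k vV nv kp vk).
    by case => E; [move: xW | move: yW]; rewrite -E vW.
  have yk : y \in B k by apply: ymid; [exact: ltnW | exact: ltnW].
  have yv : y != v by apply/negP => /eqP E; move: yW; rewrite E vW.
  case: (two_bag yk vk uk yv) => E; first by move: yW; rewrite -E uW.
  by move: evu; rewrite E eirr.
- move=> v i; rewrite inE => /andP[vx vV] nvW vi.
  have nv := noniso_sub (subD1set V x) nvW.
  case: (leqP p i) => pi; first by exists p.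
  case: (bagxy v (Fact1 v i vV nv (ltnW pi) vi)) => E.
    by move: vx; rewrite E inE eqxx.
  by exists i; rewrite // -E.
Qed.

End Dec.

End B.
Import B.

Module C.

Section Main.
Variable T : finType.
Variable e : rel T.
Hypothesis esymm : symmetric e.
Hypothesis eirr : irreflexive e.
Variable s : seq {set T}.
Local Notation B i := (nth set0 s i).
Hypothesis Hedge : forall u v, e u v -> exists i, (u \in B i) && (v \in B i).
Hypothesis Hcont : forall v i j k, i <= j -> j <= k -> k < size s ->
      v \in B i -> v \in B k -> v \in B j.
Hypothesis Hsz : forall i, #|B i| <= 2.

Local Notation sol := (sol e).
Local Notation nb := (nb e).
Local Notation noniso := (noniso e).
Local Notation Inv := (Inv e s).
Local Notation nonleaf := (nonleaf e).

Definition Ok (V F : {set T}) := [/\ F \subset V, #|F| <= 1 & forall f, f \in F -> Inv V f].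
Definition Bd (V F : {set T}) := #|sol V (V :\: F)| ^ 2 <= 2 ^ #|V|.

Lemma card_le1 (F : {set T}) : (forall a b, a \in F -> b \in F -> a = b) -> #|F| <= 1.
Proof.
move=> H; case: (set_0Vmem F) => [->|[a aF]]; first by rewrite cards0.
rewrite -(cards1 a); apply: subset_leq_card; apply/subsetP => b bF.
by rewrite inE (H b a bF aF).
Qed.

Lemma card_le1_eq (F : {set T}) a b : #|F| <= 1 -> a \in F -> b \in F -> a = b.
Proof.
move=> H aF bF; apply/eqP; apply/negPn/negP => ab.
have : #|[set a; b]| <= #|F|.
  by apply: subset_leq_card; apply/subsetP => z; rewrite !inE => /orP[]/eqP->.
by rewrite cards2 ab => /leq_trans/(_ H).
Qed.

Lemma Inv_sub (W V : {set T}) f : W \subset V -> Inv V f -> Inv W f.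
Proof.
move=> WV H v i vW nv vi; exact: (H v i (subsetP WV v vW) (noniso_sub WV nv) vi).
Qed.

Lemma Ok0 (V : {set T}) : Ok V set0.
Proof. by split; [exact: sub0set | rewrite cards0 | move=> f; rewrite inE]. Qed.

Lemma bd_le (V F V' F' : {set T}) k :
  #|sol V (V :\: F)| <= #|sol V' (V' :\: F')| -> #|V'| + k <= #|V| -> Bd V' F' -> Bd V F.
Proof.
rewrite /Bd => H1 H2 H3; apply: leq_trans (leq_trans H3 _).
  by rewrite leq_exp2r.
by rewrite leq_pexp2l // (leq_trans _ H2) // leq_addr.
Qed.

Lemma pow_le m n k : m + k <= n -> 2 ^ m * 2 ^ k <= 2 ^ n.
Proof. by move=> H; rewrite -expnD leq_pexp2l. Qed.

Lemma sol_dom (V N D : {set T}) v : D \in sol V N -> v \in N -> exists2 u, u \in D & nb v u.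
Proof. by case/solP => _ H _; apply: H. Qed.
Lemma sol_priv (V N D : {set T}) z : D \in sol V N -> z \in D ->
  exists2 w, w \in N & forall u, u \in D -> nb w u = (u == z).
Proof. by case/solP => _ _ H; apply: H. Qed.
Lemma sol_sub (V N D : {set T}) u : D \in sol V N -> u \in D -> u \in V.
Proof. by case/solP => H _ _ uD; apply: (subsetP H). Qed.

Lemma nbP v u : nb v u -> v = u \/ e v u.
Proof. by rewrite /A.nb => /orP[/eqP->|]; [left|right]. Qed.
Lemma nb_e v u : e v u -> nb v u.
Proof. by rewrite /A.nb => ->; rewrite orbT. Qed.
Lemma nb_refl v : nb v v.
Proof. exact: nbxx. Qed.

Lemma case_iso (V F : {set T}) (IH : forall V' F' : {set T}, #|V'| < #|V| -> Ok V' F' -> Bd V' F') :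
  Ok V F -> forall v, v \in V -> ~~ noniso V v -> Bd V F.
Proof.
move=> [FV F1 FI] v vV nv.
have iso : forall w, w \in V -> ~~ e w v.
  move=> w wV; apply/negP => ewv; case/negP: nv; apply/existsP; exists w.
  by rewrite wV esymm.
have sz : #|V :\ v| + 1 <= #|V| by rewrite (cardsD1 v V) vV addnC.
have lt : #|V :\ v| < #|V| by rewrite -addn1.
case: (boolP (v \in F)) => vF.
  apply: (bd_le (k := 1) _ sz (IH _ _ lt (Ok0 _))).
  apply: (part_le (X := set0)) => D Ds; split; first exact: sub0set.
  apply: (restrict Ds (sub0set _)).
  - rewrite setD0; apply/subsetP => u uD; rewrite !inE (sol_sub Ds uD) andbT.
    apply/negP => /eqP E; rewrite E in uD.
    have [w wN Hw] := sol_priv Ds uD.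
    move: (Hw v uD); rewrite eqxx => /nbP[E2|ewv].
      by move: wN; rewrite E2 inE vF.
    by move: wN; rewrite inE => /andP[_ wV]; move: (iso w wV); rewrite ewv.
  - apply/subsetP => u; rewrite !inE => /andP[_ /andP[uv uV]]; rewrite uV andbT.
    apply/negP => uF; by move: uv; rewrite (card_le1_eq F1 uF vF) eqxx.
  - by move=> w u _; rewrite inE.
  - move=> w; rewrite !inE => /andP[wF wV]; rewrite wV andbT.
    case: (eqVneq w v) => [E|]; first by move: wF; rewrite E vF.
    by [].
apply: (bd_le (k := 1) _ sz (IH (V :\ v) F lt _)); last first.
  split => //; last by move=> f fF; apply: (Inv_sub (subD1set V v) (FI f fF)).
  apply/subsetP => u uF; rewrite !inE (subsetP FV u uF) andbT.
  by apply/negP => /eqP E; move: vF; rewrite -E uF.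
apply: (part_le (X := [set v])) => D Ds.
have vD : v \in D.
  have vN : v \in V :\: F by rewrite inE vF vV.
  have [u uD nvu] := sol_dom Ds vN.
  case: (nbP nvu) => [->//|evu].
  by move: (iso u (sol_sub Ds uD)); rewrite esymm evu.
split; first by rewrite sub1set.
apply: (restrict Ds); first by rewrite sub1set.
- apply/subsetP => u; rewrite !inE => /andP[uv uD]; rewrite uv.
  exact: (sol_sub Ds uD).
- apply/subsetP => u; rewrite !inE => /andP[uF /andP[_ uV]]; by rewrite uF uV.
- move=> w u; rewrite !inE => /andP[_ /andP[wv wV]] /eqP->.
  apply/negP => /nbP[E|ewv]; first by move: wv; rewrite E eqxx.
  by move: (iso w wV); rewrite ewv.
- move=> w; rewrite !inE => /andP[wF wV]; rewrite wF wV /= andbT negbK => /eqP->.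
  by exists v; rewrite ?inE // nb_refl.
Qed.


Definition leaves (V : {set T}) y :=
  [set z in V | e y z && [forall w in V, e z w ==> (w == y)]].

Lemma leavesP (V : {set T}) y z : z \in leaves V y ->
  [/\ z \in V, e y z & forall w, w \in V -> e z w -> w = y].
Proof.
rewrite inE => /and3P[zV eyz /forallP H]; split => // w wV ezw.
by apply/eqP; move: (H w); rewrite wV ezw.
Qed.

Lemma leaves_in (V : {set T}) y z : z \in V -> e y z -> (forall w, w \in V -> e z w -> w = y) ->
  z \in leaves V y.
Proof.
move=> zV eyz H; rewrite inE zV eyz; apply/forallP => w; apply/implyP => wV.
by apply/implyP => ezw; rewrite (H w wV ezw).
Qed.

Lemma nonleafP (V : {set T}) y z : z \in V -> e y z -> z \notin leaves V y -> nonleaf V y z.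
Proof.
move=> zV eyz; rewrite inE zV eyz /= negb_forall => /existsP[w].
rewrite negb_imply => /andP[wV]; rewrite negb_imply => /andP[ezw wy].
by exists w; rewrite // wy.
Qed.

Lemma card_sub2 (V X : {set T}) a b : a \in V -> b \in V -> a \in X -> b \in X -> a != b ->
  #|V :\: X| + 2 <= #|V|.
Proof.
move=> aV bV aX bX ab; rewrite -(cardsID X V) addnC leq_add2r.
have <- : #|[set a; b]| = 2 by rewrite cards2 ab.
by apply: subset_leq_card; apply/subsetP => z; rewrite !inE => /orP[]/eqP->; rewrite ?aV ?aX ?bV ?bX.
Qed.

Lemma amgm a b : 2 * (a * b) <= a ^ 2 + b ^ 2.
Proof. case: (leqP a b) => h.
- have [d ->] : exists d, b = a + d by exists (b - a); lia.
  rewrite !expnS !expn0; nia.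
- have [d ->] : exists d, a = b + d by exists (a - b); lia.
  rewrite !expnS !expn0; nia.
Qed.

Lemma ar2 a b P Q : a ^ 2 <= P -> b ^ 2 <= P -> 4 * P <= Q -> (a + b) ^ 2 <= Q.
Proof.
move=> H1 H2 H3; have h := amgm a b.
have -> : (a + b) ^ 2 = a ^ 2 + b ^ 2 + 2 * (a * b) by rewrite !expnS !expn0; nia.
lia.
Qed.

Lemma ar3 a b c P1 P2 P3 Q : a ^ 2 <= P1 -> b ^ 2 <= P2 -> c ^ 2 <= P3 ->
  3 * (P1 + P2 + P3) <= Q -> (a + b + c) ^ 2 <= Q.
Proof.
move=> H1 H2 H3 H4.
have h1 := amgm a b.
have h2 := amgm a c.
have h3 := amgm b c.
have -> : (a + b + c) ^ 2 = a ^ 2 + b ^ 2 + c ^ 2 + 2 * (a * b) + 2 * (a * c) + 2 * (b * c) by rewrite !expnS !expn0; nia.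
lia.
Qed.

Lemma addtr a b c k1 k2 : a + k1 <= b -> b + k2 <= c -> a + (k1 + k2) <= c.
Proof. lia. Qed.
Lemma ltsz a c k : a + k <= c -> 0 < k -> a < c.
Proof. lia. Qed.
Lemma fin_ar P1 P3 Q : P1 * 2 ^ 3 <= Q -> P3 * 2 ^ 4 <= Q -> 3 * (P1 + P3 + P1) <= Q.
Proof. rewrite !expnS expn0; lia. Qed.
Lemma fin_ar2 P Q : P * 2 ^ 4 <= Q -> 3 * (P + P + P) <= Q.
Proof. rewrite !expnS expn0; lia. Qed.

Lemma case_support (V F : {set T}) x y
  (IH : forall V' F' : {set T}, #|V'| < #|V| -> Ok V' F' -> Bd V' F') :
  Ok V F -> x \in V -> y \in V -> e x y -> (forall z, z \in V -> e x z -> z = y) ->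
  (forall z1 z2, z1 \in V -> z2 \in V -> e y z1 -> e y z2 ->
        nonleaf V y z1 -> nonleaf V y z2 -> z1 = z2) ->
  (forall (W : {set T}) r, W \subset V -> x \notin W -> y \notin W -> r \in W -> e y r ->
        nonleaf V y r -> Inv W r) ->
  (forall f, f \in F -> f = y) -> Bd V F.
Proof.
move=> [FV F1 FI] xV yV exy xleaf uniqnl P1 Fy.
set L := leaves V y.
have xL : x \in L by apply: leaves_in => //; rewrite esymm.
have leafP : forall l, l \in L -> [/\ l \in V, e y l & forall w, w \in V -> e l w -> w = y].
  by move=> l; apply: leavesP.
have nlP : forall z, z \in V -> e y z -> z \notin L -> nonleaf V y z.
  by move=> z; apply: nonleafP.
clearbody L.
have xny : x != y by apply/negP => /eqP E; move: exy; rewrite E eirr.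
set V' := V :\: (y |: L).
have V'E : forall u, u \in V' = [&& u \in V, u != y & u \notin L].
  by move=> u; rewrite /V' !inE negb_or andbC andbA.
have sz : #|V'| + 2 <= #|V|.
  apply: (card_sub2 (X := y |: L) xV yV) => //.
    by rewrite in_setU1 xL orbT.
  by rewrite in_setU1 eqxx.
clearbody V'.
have lt : #|V'| < #|V| by apply: leq_trans sz; rewrite addn2.
have V'P : forall u, u \in V' -> [/\ u \in V, u != y & u \notin L].
  by move=> u; rewrite V'E => /and3P[].
have lny : forall l, l \in L -> l != y.
  by move=> l /leafP[_ eyl _]; apply/negP => /eqP E; move: eyl; rewrite E eirr.
set F' := [set z in V' | e y z].
have F'E : forall z, z \in F' = (z \in V') && e y z by move=> z; rewrite inE.
clearbody F'.
have Ok' : Ok V' F'.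
  split.
  - by apply/subsetP => z; rewrite F'E => /andP[].
  - apply: card_le1 => a b; rewrite !F'E => /andP[aV' eya] /andP[bV' ebb].
    have [aV _ aL] := V'P a aV'; have [bV _ bL] := V'P b bV'.
    by apply: uniqnl => //; apply: nlP.
  - move=> r; rewrite F'E => /andP[rV' eyr]; have [rV _ rL] := V'P r rV'.
    apply: P1 => //.
    + by apply/subsetP => u /V'P[].
    + by apply/negP => /V'P[_ _]; rewrite xL.
    + by apply/negP => /V'P[_]; rewrite eqxx.
    + exact: nlP.
have NE : forall w, w \in V :\: F -> w \in V by move=> w; rewrite inE => /andP[].
rewrite /Bd (split_le _ (fun D => y \in D)).
apply: (ar2 (P := 2 ^ #|V'|)).
-
  apply: leq_trans (IH V' F' lt Ok'); rewrite leq_exp2r //.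
  apply: (part_le (X := [set y])) => D; rewrite inE => /andP[Ds yD].
  split; first by rewrite sub1set.
  apply: (restrict Ds); first by rewrite sub1set.
  + apply/subsetP => u; rewrite in_setD1 => /andP[uy uD].
    have uV := sol_sub Ds uD.
    rewrite V'E uV uy /=.
    apply/negP => uL; have [uV' eyu ul] := leafP u uL.
    have [w wN Hw] := sol_priv Ds uD.
    move: (Hw u uD) (Hw y yD); rewrite eqxx eq_sym (negbTE uy) => /nbP[E|ewu].
      by rewrite E nb_e // esymm.
    by rewrite (ul w (NE w wN) ltac:(by rewrite esymm)) nb_refl.
  + apply/subsetP => u; rewrite in_setD F'E negb_and => /andP[H uV'].
    have [uV uy _] := V'P u uV'; move: H; rewrite uV' /= => neyu.
    rewrite in_setD uV andbT; apply/negP => uF; by move: uy; rewrite (Fy u uF) eqxx.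
  + move=> v u; rewrite in_setD F'E => /andP[H vV'] /set1P->.
    have [vV vy _] := V'P v vV'; move: H; rewrite vV' /= => neyv.
    apply/negP => /nbP[E|evy]; first by move: vy; rewrite E eqxx.
    by move: neyv; rewrite esymm evy.
  + move=> w wN wN'; exists y; first by rewrite inE.
    case: (boolP (w \in V')) => wV'.
      have : w \in F' by move: wN'; rewrite in_setD wV' andbT negbK.
      by rewrite F'E => /andP[_ eyw]; rewrite nb_e // esymm.
    case: (eqVneq w y) => [->|wy]; first exact: nb_refl.
    have wL : w \in L by move: wV'; rewrite V'E (NE w wN) wy /= negbK.
    by have [_ eyw _] := leafP w wL; rewrite nb_e // esymm.
-
  apply: leq_trans (IH V' set0 lt (Ok0 _)); rewrite leq_exp2r //.
  apply: (part_le (X := L)) => D; rewrite inE => /andP[Ds yD].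
  have LD : L \subset D.
    apply/subsetP => l lL; have [lV eyl ll] := leafP l lL.
    have lN : l \in V :\: F.
      rewrite in_setD lV andbT; apply/negP => lF; by move: (lny l lL); rewrite (Fy l lF) eqxx.
    have [u uD nlu] := sol_dom Ds lN.
    case: (nbP nlu) => [->//|elu].
    have E := ll u (sol_sub Ds uD) elu; by move: uD; rewrite E (negbTE yD).

  split => //.
  apply: (restrict Ds) => //.
  + apply/subsetP => u; rewrite in_setD => /andP[uL uD].
    rewrite V'E (sol_sub Ds uD) uL andbT /=.
    by apply/negP => /eqP E; move: yD; rewrite -E uD.
  + rewrite setD0; apply/subsetP => u uV'; have [uV uy _] := V'P u uV'.
    rewrite in_setD uV andbT; apply/negP => uF; by move: uy; rewrite (Fy u uF) eqxx.
  + move=> v u; rewrite setD0 => vV' uL; have [vV vy vL] := V'P v vV'.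
    have [_ _ ul] := leafP u uL.
    apply/negP => /nbP[E|evu]; first by move: vL; rewrite E uL.
    by move: vy; rewrite (ul v vV ltac:(by rewrite esymm)) eqxx.
  + move=> w wN; rewrite setD0 V'E (NE w wN) /= negb_and negbK.
    case: (eqVneq w y) => [->|wy] /= H.
      by exists x => //; rewrite nb_e // esymm.
    by exists w; [exact: (negPn H) | exact: nb_refl].
- by rewrite mulnC (_ : 4 = 2 ^ 2) //; apply: pow_le.
Qed.

Lemma FxE (V F : {set T}) x : Ok V F -> x \in F -> forall u, (u \in F) = (u == x).
Proof.
move=> [_ F1 _] xF u; apply/idP/eqP => [uF|->//]; exact: (card_le1_eq F1 uF xF).
Qed.

Lemma case_leaf5 (V F : {set T}) x y l
  (IH : forall V' F' : {set T}, #|V'| < #|V| -> Ok V' F' -> Bd V' F') :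
  Ok V F -> x \in F -> x \in V -> y \in V -> e x y -> (forall z, z \in V -> e x z -> z = y) ->
  l \in V -> e y l -> (forall w, w \in V -> e l w -> w = y) -> l != x -> Bd V F.
Proof.
move=> OkF xF xV yV exy xleaf lV eyl ll lx.
have FE := FxE OkF xF.
have NE : forall w, (w \in V :\: F) = (w \in V) && (w != x).
  by move=> w; rewrite in_setD FE andbC.
have sz : #|V :\ x| + 1 <= #|V| by rewrite (cardsD1 x V) xV addnC.
have lt : #|V :\ x| < #|V| by rewrite -addn1.
apply: (bd_le (k := 1) _ sz (IH _ _ lt (Ok0 _))).
apply: (part_le (X := set0)) => D Ds; split; first exact: sub0set.
apply: (restrict Ds (sub0set _)).
- rewrite setD0; apply/subsetP => u uD; rewrite in_setD1 (sol_sub Ds uD) andbT.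
  apply/negP => /eqP E; rewrite E in uD.
  have [w wN Hw] := sol_priv Ds uD.
  move: wN; rewrite NE => /andP[wV wx].
  have wy : w = y.
    move: (Hw x uD); rewrite eqxx => /nbP[E2|ewx]; first by move: wx; rewrite E2 eqxx.
    by apply: xleaf => //; rewrite esymm.
  rewrite wy in Hw.
  case: (boolP (y \in D)) => yD.
    by move: (Hw y yD); rewrite nb_refl => /esym/eqP E3; move: exy; rewrite E3 eirr.
  have lN : l \in V :\: F by rewrite NE lV lx.
  have [u2 uD' nlu] := sol_dom Ds lN.
  have ul : u2 = l.
    case: (nbP nlu) => [->//|elu]; have E4 := ll u2 (sol_sub Ds uD') elu.
    by move: yD; rewrite -E4 uD'.
  rewrite ul in uD'.
  by move: (Hw l uD'); rewrite nb_e // (negbTE lx).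
- by rewrite setD0; apply/subsetP => u; rewrite in_setD1 NE andbC.
- by move=> w u _; rewrite inE.
- by move=> w; rewrite NE setD0 in_setD1 andbC => ->.
Qed.

Lemma case_leaf6 (V F : {set T}) x y
  (IH : forall V' F' : {set T}, #|V'| < #|V| -> Ok V' F' -> Bd V' F') :
  Ok V F -> x \in F -> x \in V -> y \in V -> e x y -> (forall z, z \in V -> e x z -> z = y) ->
  (forall z, z \in V -> e y z -> z = x) -> Bd V F.
Proof.
move=> OkF xF xV yV exy xleaf yleaf.
have FE := FxE OkF xF.
have NE : forall w, (w \in V :\: F) = (w \in V) && (w != x).
  by move=> w; rewrite in_setD FE andbC.
have xny : x != y by apply/negP => /eqP E; move: exy; rewrite E eirr.
set V2 := V :\: [set x; y].
have V2E : forall u, u \in V2 = [&& u \in V, u != x & u != y].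
  by move=> u; rewrite /V2 !inE negb_or andbC andbA.
have sz : #|V2| + 2 <= #|V|.
  by apply: (card_sub2 (X := [set x; y]) xV yV) => //; rewrite !inE eqxx ?orbT.
clearbody V2.
have lt : #|V2| < #|V| by apply: leq_trans sz; rewrite addn2.
have nbx : forall v, v \in V2 -> ~~ nb v x.
  move=> v; rewrite V2E => /and3P[vV vx vy]; apply/negP => /nbP[E|evx].
    by move: vx; rewrite E eqxx.
  by move: vy; rewrite (xleaf v vV ltac:(by rewrite esymm)) eqxx.
have nby : forall v, v \in V2 -> ~~ nb v y.
  move=> v; rewrite V2E => /and3P[vV vx vy]; apply/negP => /nbP[E|evy].
    by move: vy; rewrite E eqxx.
  by move: vx; rewrite (yleaf v vV ltac:(by rewrite esymm)) eqxx.
have T2 := IH V2 set0 lt (Ok0 _).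
rewrite /Bd (split_le _ (fun D => x \in D)).
apply: (ar2 (P := 2 ^ #|V2|)); last by rewrite mulnC (_ : 4 = 2 ^ 2) //; apply: pow_le.
- apply: leq_trans T2; rewrite leq_exp2r //.
  apply: (part_le (X := [set x])) => D; rewrite inE => /andP[Ds xD].
  have yD : y \notin D.
    apply/negP => yD; have [w wN Hw] := sol_priv Ds xD.
    move: wN; rewrite NE => /andP[wV wx].
    have wy : w = y.
      move: (Hw x xD); rewrite eqxx => /nbP[E2|ewx]; first by move: wx; rewrite E2 eqxx.
      by apply: xleaf => //; rewrite esymm.
    by move: (Hw y yD); rewrite wy nb_refl eq_sym (negbTE xny).
  split; first by rewrite sub1set.
  apply: (restrict Ds); first by rewrite sub1set.
  + apply/subsetP => u; rewrite in_setD1 => /andP[ux uD]; rewrite V2E (sol_sub Ds uD) ux.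
    by apply/negP => /eqP E; move: yD; rewrite -E uD.
  + by apply/subsetP => u; rewrite setD0 V2E NE => /and3P[-> -> _].
  + by move=> v u; rewrite setD0 => vV2 /set1P->; apply: nbx.
  + move=> w; rewrite NE setD0 V2E => /andP[wV wx]; rewrite wV wx /= negbK => /eqP->.
    by exists x; rewrite ?inE // nb_e // esymm.
- apply: leq_trans T2; rewrite leq_exp2r //.
  apply: (part_le (X := [set y])) => D; rewrite inE => /andP[Ds xD].
  have yD : y \in D.
    have yN : y \in V :\: F by rewrite NE yV eq_sym xny.
    have [u uD nyu] := sol_dom Ds yN.
    case: (nbP nyu) => [->//|eyu]; have E := yleaf u (sol_sub Ds uD) eyu.
    by move: xD; rewrite -E uD.
  split; first by rewrite sub1set.
  apply: (restrict Ds); first by rewrite sub1set.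
  + apply/subsetP => u; rewrite in_setD1 => /andP[uy uD]; rewrite V2E (sol_sub Ds uD) uy andbT.
    by apply/negP => /eqP E; move: xD; rewrite -E uD.
  + by apply/subsetP => u; rewrite setD0 V2E NE => /and3P[-> -> _].
  + by move=> v u; rewrite setD0 => vV2 /set1P->; apply: nby.
  + move=> w; rewrite NE setD0 V2E => /andP[wV wx]; rewrite wV wx /= negbK => /eqP->.
    by exists y; rewrite ?inE // nb_refl.
Qed.

Lemma case_hard (V F : {set T}) x y r
  (IH : forall V' F' : {set T}, #|V'| < #|V| -> Ok V' F' -> Bd V' F') :
  Ok V F -> x \in F -> x \in V -> y \in V -> e x y -> (forall z, z \in V -> e x z -> z = y) ->
  r \in V -> e y r -> r != x -> nonleaf V y r ->
  (forall z, z \in V -> e y z -> z = x \/ z = r) ->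
  (forall (W : {set T}) r, W \subset V -> x \notin W -> y \notin W -> r \in W -> e y r ->
        nonleaf V y r -> Inv W r) -> Bd V F.
Proof.
move=> OkF xF xV yV exy xleaf rV eyr rx nlr yN P1.
have FE := FxE OkF xF.
have NE : forall w, (w \in V :\: F) = (w \in V) && (w != x).
  by move=> w; rewrite in_setD FE andbC.
have xny : x != y by apply/negP => /eqP E; move: exy; rewrite E eirr.
have rny : r != y by apply/negP => /eqP E; move: eyr; rewrite E eirr.
set H := V :\: [set x; y].
have HE : forall u, u \in H = [&& u \in V, u != x & u != y].
  by move=> u; rewrite /H !inE negb_or andbC andbA.
have szH : #|H| + 2 <= #|V|.
  by apply: (card_sub2 (X := [set x; y]) xV yV) => //; rewrite !inE eqxx ?orbT.
clearbody H.
have HV : H \subset V by apply/subsetP => u; rewrite HE => /and3P[].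
have rH : r \in H by rewrite HE rV rx.
have nbrV : forall z w, z \in H -> w \in V -> e z w -> w \in H \/ (w = y /\ z = r).
  move=> z w; rewrite HE => /and3P[zV zx zy] wV ezw.
  case: (eqVneq w x) => [E|wx].
    by move: zy; rewrite (xleaf z zV ltac:(by rewrite -E esymm)) eqxx.
  case: (eqVneq w y) => [E|wy]; last by left; rewrite HE wV wx wy.
  right; split => //; case: (yN z zV ltac:(by rewrite -E esymm)) => // E2.
  by move: zx; rewrite E2 eqxx.
have nrH : noniso H r.
  case: nlr => w wV /andP[wy erw]; apply/existsP; exists w.
  case: (nbrV r w rH wV erw) => [->//|[E _]]; by move: wy; rewrite E eqxx.
have IrH : Inv H r.
  apply: P1 => //; first by rewrite HE eqxx andbF.
  by rewrite HE eqxx !andbF.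
have [x2 [y2 [[x2H y2H ex2y2 x2leaf uniq2] [Ff2 P12 P22]]]] :=
  config esymm eirr Hedge Hcont Hsz rH nrH.
have rxy2 := Ff2 r rH nrH IrH.
have P1f : forall D, D \in sol V (V :\: F) -> y \in D -> x \notin D /\ r \notin D.
  move=> D Ds yD; split.
    apply/negP => xD; have [w wN Hw] := sol_priv Ds xD.
    move: wN; rewrite NE => /andP[wV wx].
    have wy : w = y.
      move: (Hw x xD); rewrite eqxx => /nbP[E2|ewx]; first by move: wx; rewrite E2 eqxx.
      by apply: xleaf => //; rewrite esymm.
    by move: (Hw y yD); rewrite wy nb_refl eq_sym (negbTE xny).
  apply/negP => rD; have [w wN Hw] := sol_priv Ds yD.
  move: wN; rewrite NE => /andP[wV wx].
  have : w = y \/ w = r.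
    move: (Hw y yD); rewrite eqxx => /nbP[->|ewy]; first by left.
    by case: (yN w wV ltac:(by rewrite esymm)) => E; [move: wx; rewrite E eqxx|right].
  by case=> E; move: (Hw r rD); rewrite E (negbTE rny) ?nb_refl // nb_e.
have P2f : forall D, D \in sol V (V :\: F) -> y \notin D -> x \in D -> r \notin D.
  move=> D Ds yD xD; apply/negP => rD; have [w wN Hw] := sol_priv Ds xD.
  move: wN; rewrite NE => /andP[wV wx].
  have wy : w = y.
    move: (Hw x xD); rewrite eqxx => /nbP[E2|ewx]; first by move: wx; rewrite E2 eqxx.
    by apply: xleaf => //; rewrite esymm.
  by move: (Hw r rD); rewrite wy nb_e // (negbTE rx).
have P3f : forall D, D \in sol V (V :\: F) -> y \notin D -> x \notin D -> r \in D.
  move=> D Ds yD xD.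
  have yN' : y \in V :\: F by rewrite NE yV eq_sym xny.
  have [u uD nyu] := sol_dom Ds yN'.
  case: (nbP nyu) => [E|eyu]; first by move: yD; rewrite E uD.
  case: (yN u (sol_sub Ds uD) eyu) => E; first by move: xD; rewrite -E uD.
  by rewrite -E.
rewrite /Bd; set S := sol V (V :\: F).
have SP : forall D, D \in S -> D \in sol V (V :\: F) by [].
clearbody S.
rewrite (split_le S (fun D => y \in D)).
rewrite [X in _ + X](split_le _ (fun D => x \in D)) addnA.
have memP1 : forall D, D \in [set D in S | y \in D] -> D \in S /\ y \in D.
  by move=> D; rewrite inE => /andP[].
have memP2 : forall D, D \in [set D0 in [set D in S | ~~ (y \in D)] | x \in D0] ->
    [/\ D \in S, y \notin D & x \in D].
  by move=> D; rewrite inE => /andP[]; rewrite inE => /andP[].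
have memP3 : forall D, D \in [set D0 in [set D in S | ~~ (y \in D)] | ~~ (x \in D0)] ->
    [/\ D \in S, y \notin D & x \notin D].
  by move=> D; rewrite inE => /andP[]; rewrite inE => /andP[].
have HP : forall u, u \in H -> [/\ u \in V, u != x & u != y].
  by move=> u; rewrite HE => /and3P[].
have NH : forall u, u \in H -> u \in V :\: F.
  by move=> u /HP[uV ux _]; rewrite NE uV ux.
have nbx : forall v, v \in H -> ~~ nb v x.
  move=> v /HP[vV vx vy]; apply/negP => /nbP[E|evx]; first by move: vx; rewrite E eqxx.
  by move: vy; rewrite (xleaf v vV ltac:(by rewrite esymm)) eqxx.
have nby : forall v, v \in H -> v != r -> ~~ nb v y.
  move=> v /HP[vV vx vy] vr; apply/negP => /nbP[E|evy]; first by move: vy; rewrite E eqxx.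
  case: (yN v vV ltac:(by rewrite esymm)) => E; first by move: vx; rewrite E eqxx.
  by move: vr; rewrite E eqxx.
have notH : forall w, w \in V :\: F -> w \notin H -> w = y.
  by move=> w; rewrite NE HE => /andP[wV wx]; rewrite wV wx /= negbK => /eqP.
case: rxy2 => Er.
- (* r is a leaf of y2 in H *)
  subst x2.
  have y2r : y2 != r by apply/negP => /eqP E; move: ex2y2; rewrite E eirr.
  have rnb : forall w, w \in V -> e r w -> w = y \/ w = y2.
    move=> w wV erw; case: (nbrV r w rH wV erw) => [wH|[E _]]; last by left.
    by right; apply: x2leaf.
  set L2 := leaves H y2.
  have rL2 : r \in L2 by apply: leaves_in => //; rewrite esymm.
  have L2P : forall l, l \in L2 -> [/\ l \in H, e y2 l & forall w, w \in H -> e l w -> w = y2].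
    by move=> l; apply: leavesP.
  have nl2 : forall z, z \in H -> e y2 z -> z \notin L2 -> nonleaf H y2 z.
    by move=> z; apply: nonleafP.
  clearbody L2.
  set V1 := H :\ r.
  have V1E : forall u, u \in V1 = (u \in H) && (u != r) by move=> u; rewrite in_setD1 andbC.
  have sz1 : #|V1| + 1 <= #|H| by rewrite /V1 (cardsD1 r H) rH addnC.
  have V1I : Inv V1 y2 := P22.
  clearbody V1.
  set V3 := H :\: (y2 |: L2).
  have V3E : forall u, u \in V3 = [&& u \in H, u != y2 & u \notin L2].
    by move=> u; rewrite /V3 !inE negb_or andbC andbA.
  have sz3 : #|V3| + 2 <= #|H|.
    apply: (card_sub2 (X := y2 |: L2) rH y2H) => //; first by rewrite in_setU1 rL2 orbT.
      by rewrite in_setU1 eqxx.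
    by rewrite eq_sym.
  clearbody V3.
  set F3 := [set z in V3 | e y2 z].
  have F3E : forall z, z \in F3 = (z \in V3) && e y2 z by move=> z; rewrite inE.
  clearbody F3.
  have Ok3 : Ok V3 F3.
    split.
    - by apply/subsetP => z; rewrite F3E => /andP[].
    - apply: card_le1 => a b; rewrite !F3E V3E => /andP[/and3P[aH _ aL] eya].
      rewrite V3E => /andP[/and3P[bH _ bL] eyb].
      by apply: uniq2 => //; apply: nl2.
    - move=> z; rewrite F3E => /andP[zV3 eyz]; move: (zV3); rewrite V3E => /and3P[zH _ zL].
      apply: P12 => //.
      + by apply/subsetP => u; rewrite V3E => /and3P[].
      + by rewrite V3E rL2 !andbF.
      + by rewrite V3E eqxx andbF.
      + exact: nl2.
  have Ok1 : Ok V1 [set y2].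
    split.
    - by rewrite sub1set V1E y2H.
    - by rewrite cards1.
    - by move=> f /set1P->.
  have sz1' := addtr sz1 szH.
  have sz3' := addtr sz3 szH.
  have lt1 : #|V1| < #|V| by apply: ltsz sz1' _.
  have lt3 : #|V3| < #|V| by apply: ltsz sz3' _.
  apply: (ar3 (P1 := 2 ^ #|V1|) (P2 := 2 ^ #|V3|) (P3 := 2 ^ #|V1|)).
  + apply: leq_trans (IH V1 set0 lt1 (Ok0 _)); rewrite leq_exp2r //.
    apply: (part_le (X := [set y])) => D /memP1[Ds yD].
    have [xD rD] := P1f D (SP D Ds) yD.
    split; first by rewrite sub1set.
    apply: (restrict (SP D Ds)); first by rewrite sub1set.
    * apply/subsetP => u; rewrite in_setD1 => /andP[uy uD].
      have uV := sol_sub (SP D Ds) uD.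
      rewrite V1E HE uV uy andbT /=; apply/andP; split.
        by apply/negP => /eqP E; move: xD; rewrite -E uD.
      by apply/negP => /eqP E; move: rD; rewrite -E uD.
    * by apply/subsetP => u; rewrite setD0 V1E => /andP[/NH].
    * move=> v u; rewrite setD0 V1E => /andP[vH vr] /set1P->; exact: nby.
    * move=> w wN; rewrite setD0 V1E negb_and negbK => H1; exists y; rewrite ?inE //.
      case: (boolP (w \in H)) => wH; last by rewrite (notH w wN wH) nb_refl.
      by move: H1; rewrite wH /= => /eqP->; rewrite nb_e // esymm.
  + apply: leq_trans (IH V3 F3 lt3 Ok3); rewrite leq_exp2r //.
    apply: (part_le (X := [set x; y2])) => D /memP2[Ds yD xD].
    have rD := P2f D (SP D Ds) yD xD.
    have y2D : y2 \in D.
      have [u uD nru] := sol_dom (SP D Ds) (NH r rH).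
      case: (nbP nru) => [E|eru]; first by move: rD; rewrite E uD.
      case: (rnb u (sol_sub (SP D Ds) uD) eru) => E; first by move: yD; rewrite -E uD.
      by rewrite -E.
    have L2D : forall l, l \in L2 -> l \notin D.
      move=> l lL; apply/negP => lD; have [lH eyl ll] := L2P l lL.
      have lr : l != r by apply/negP => /eqP E; move: rD; rewrite -E lD.
      have [w wN Hw] := sol_priv (SP D Ds) lD.
      have wE : w = l \/ w = y2.
        move: (Hw l lD); rewrite eqxx => /nbP[->|ewl]; first by left.
        right; have wV : w \in V by move: wN; rewrite NE => /andP[].
        case: (nbrV l w lH wV ltac:(by rewrite esymm)) => [wH|[_ E]].
          by apply: ll => //; rewrite esymm.
        by move: lr; rewrite E eqxx.
      have ly2 : l != y2 by apply/negP => /eqP E; move: eyl; rewrite E eirr.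
      move: (Hw y2 y2D); rewrite eq_sym (negbTE ly2).
      by case: wE => ->; rewrite ?nb_refl // nb_e // esymm.
    split; first by apply/subsetP => u; rewrite !inE => /orP[]/eqP->.
    apply: (restrict (SP D Ds)); first by apply/subsetP => u; rewrite !inE => /orP[]/eqP->.
    * apply/subsetP => u; rewrite in_setD !inE negb_or => /andP[/andP[ux uy2] uD].
      have uV := sol_sub (SP D Ds) uD.
      rewrite V3E HE uV ux uy2 /=; apply/andP; split.
        by apply/negP => /eqP E; move: yD; rewrite -E uD.
      by apply/negP => uL; move: (L2D u uL); rewrite uD.
    * by apply/subsetP => u; rewrite in_setD V3E => /andP[_ /and3P[/NH]].
    * move=> v u; rewrite in_setD F3E V3E => /andP[H1 /and3P[vH vy2 vL]].
      rewrite !inE => /orP[]/eqP->; first exact: nbx.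
      apply/negP => /nbP[E|evy]; first by move: vy2; rewrite E eqxx.
      by move: H1; rewrite vH vy2 vL /= esymm evy.
    * move=> w wN; rewrite in_setD F3E negb_and negbK => H1.
      case: (boolP (w \in H)) => wH; last first.
        by exists x; rewrite ?inE ?eqxx // (notH w wN wH) nb_e // esymm.
      exists y2; rewrite ?inE ?eqxx ?orbT //.
      case: (boolP (w \in V3)) => wV3.
        by move: H1; rewrite wV3 /= orbF => eyw; rewrite nb_e // esymm.
      move: wV3; rewrite V3E wH /= negb_and negbK => /orP[/eqP->|wL]; first exact: nb_refl.
      by have [_ eyw _] := L2P w (negPn wL); rewrite nb_e // esymm.
  + apply: leq_trans (IH V1 [set y2] lt1 Ok1); rewrite leq_exp2r //.
    apply: (part_le (X := [set r])) => D /memP3[Ds yD xD].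
    have rD := P3f D (SP D Ds) yD xD.
    split; first by rewrite sub1set.
    apply: (restrict (SP D Ds)); first by rewrite sub1set.
    * apply/subsetP => u; rewrite in_setD1 => /andP[ur uD].
      have uV := sol_sub (SP D Ds) uD.
      rewrite V1E HE uV ur andbT /=; apply/andP; split.
        by apply/negP => /eqP E; move: xD; rewrite -E uD.
      by apply/negP => /eqP E; move: yD; rewrite -E uD.
    * by apply/subsetP => u; rewrite in_setD V1E => /andP[_ /andP[/NH]].
    * move=> v u; rewrite in_setD V1E => /andP[vy2 /andP[vH vr]] /set1P->.
      apply/negP => /nbP[E|evr]; first by move: vr; rewrite E eqxx.
      have vV : v \in V by move/HP: vH => [].
      case: (rnb v vV ltac:(by rewrite esymm)) => E.
        by move: vH; rewrite E HE eqxx !andbF.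
      by move: vy2; rewrite E inE eqxx.
    * move=> w wN; rewrite in_setD V1E negb_and negbK => H1; exists r; rewrite ?inE //.
      case: (boolP (w \in H)) => wH; last by rewrite (notH w wN wH) nb_e.
      move: H1; rewrite wH /= => /orP[/set1P->|]; last by rewrite negbK => /eqP->; exact: nb_refl.
      by rewrite nb_e // esymm.
  + by apply: fin_ar; apply: pow_le.
- (* r is the support y2 in H *)
  subst y2.
  set L2 := leaves H r.
  have x2L : x2 \in L2 by apply: leaves_in => //; rewrite esymm.
  have L2P : forall l, l \in L2 -> [/\ l \in H, e r l & forall w, w \in H -> e l w -> w = r].
    by move=> l; apply: leavesP.
  have nl2 : forall z, z \in H -> e r z -> z \notin L2 -> nonleaf H r z.
    by move=> z; apply: nonleafP.
  clearbody L2.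
  have VL : forall l w, l \in L2 -> w \in V -> e l w -> w = r.
    move=> l w lL wV elw; have [lH erl ll] := L2P l lL.
    case: (nbrV l w lH wV elw) => [wH|[_ E]]; first exact: ll.
    by move: erl; rewrite E eirr.
  have lnr : forall l, l \in L2 -> l != r.
    by move=> l /L2P[_ erl _]; apply/negP => /eqP E; move: erl; rewrite E eirr.
  have x2r : x2 != r by apply: lnr.
  set V2 := H :\: (r |: L2).
  have V2E : forall u, u \in V2 = [&& u \in H, u != r & u \notin L2].
    by move=> u; rewrite /V2 !inE negb_or andbC andbA.
  have sz2 : #|V2| + 2 <= #|H|.
    apply: (card_sub2 (X := r |: L2) x2H rH) => //; first by rewrite in_setU1 x2L orbT.
    by rewrite in_setU1 eqxx.
  clearbody V2.
  set F3 := [set z in V2 | e r z].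
  have F3E : forall z, z \in F3 = (z \in V2) && e r z by move=> z; rewrite inE.
  clearbody F3.
  have Ok3 : Ok V2 F3.
    split.
    - by apply/subsetP => z; rewrite F3E => /andP[].
    - apply: card_le1 => a b; rewrite !F3E V2E => /andP[/and3P[aH _ aL] eya].
      rewrite V2E => /andP[/and3P[bH _ bL] eyb].
      by apply: uniq2 => //; apply: nl2.
    - move=> z; rewrite F3E => /andP[zV2 eyz]; move: (zV2); rewrite V2E => /and3P[zH _ zL].
      apply: P12 => //.
      + by apply/subsetP => u; rewrite V2E => /and3P[].
      + by rewrite V2E x2L !andbF.
      + by rewrite V2E eqxx andbF.
      + exact: nl2.
  have sz2' := addtr sz2 szH.
  have lt2 : #|V2| < #|V| by apply: ltsz sz2' _.
  have L2D : forall D, D \in S -> r \notin D -> L2 \subset D.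
    move=> D Ds rD; apply/subsetP => l lL; have [lH _ _] := L2P l lL.
    have [u uD nlu] := sol_dom (SP D Ds) (NH l lH).
    case: (nbP nlu) => [->//|elu].
    by have E := VL l u lL (sol_sub (SP D Ds) uD) elu; move: rD; rewrite -E uD.
  have nbL : forall v u, v \in V2 -> u \in L2 -> ~~ nb v u.
    move=> v u; rewrite V2E => /and3P[vH vr vL] uL; apply/negP => /nbP[E|evu].
      by move: vL; rewrite E uL.
    by move: vr; rewrite (VL u v uL (subsetP HV v vH) ltac:(by rewrite esymm)) eqxx.
  apply: (ar3 (P1 := 2 ^ #|V2|) (P2 := 2 ^ #|V2|) (P3 := 2 ^ #|V2|)).
  + apply: leq_trans (IH V2 set0 lt2 (Ok0 _)); rewrite leq_exp2r //.
    apply: (part_le (X := y |: L2)) => D /memP1[Ds yD].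
    have [xD rD] := P1f D (SP D Ds) yD.
    have LD := L2D D Ds rD.
    have XD : y |: L2 \subset D by rewrite subUset sub1set yD LD.
    split => //.
    apply: (restrict (SP D Ds)) => //.
    * apply/subsetP => u; rewrite in_setD in_setU1 negb_or => /andP[/andP[uy uL] uD].
      have uV := sol_sub (SP D Ds) uD.
      rewrite V2E HE uV uy uL !andbT /=; apply/andP; split.
        by apply/negP => /eqP E; move: xD; rewrite -E uD.
      by apply/negP => /eqP E; move: rD; rewrite -E uD.
    * by apply/subsetP => u; rewrite setD0 V2E => /and3P[/NH].
    * move=> v u; rewrite setD0 => vV2; rewrite in_setU1 => /orP[/eqP->|uL]; last exact: nbL.
      by move: vV2; rewrite V2E => /and3P[vH vr _]; apply: nby.
    * move=> w wN; rewrite setD0 => wV2.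
      case: (boolP (w \in H)) => wH; last first.
        by exists y; rewrite ?in_setU1 ?eqxx // (notH w wN wH) nb_refl.
      move: wV2; rewrite V2E wH /= negb_and negbK => /orP[/eqP->|wL].
        by exists y; rewrite ?in_setU1 ?eqxx // nb_e // esymm.
      by exists w; rewrite ?in_setU1 ?(negPn wL) ?orbT // nb_refl.
  + apply: leq_trans (IH V2 set0 lt2 (Ok0 _)); rewrite leq_exp2r //.
    apply: (part_le (X := x |: L2)) => D /memP2[Ds yD xD].
    have rD := P2f D (SP D Ds) yD xD.
    have LD := L2D D Ds rD.
    have XD : x |: L2 \subset D by rewrite subUset sub1set xD LD.
    split => //.
    apply: (restrict (SP D Ds)) => //.
    * apply/subsetP => u; rewrite in_setD in_setU1 negb_or => /andP[/andP[ux uL] uD].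
      have uV := sol_sub (SP D Ds) uD.
      rewrite V2E HE uV ux uL !andbT /=; apply/andP; split.
        by apply/negP => /eqP E; move: yD; rewrite -E uD.
      by apply/negP => /eqP E; move: rD; rewrite -E uD.
    * by apply/subsetP => u; rewrite setD0 V2E => /and3P[/NH].
    * move=> v u; rewrite setD0 => vV2; rewrite in_setU1 => /orP[/eqP->|uL]; last exact: nbL.
      by move: vV2; rewrite V2E => /and3P[vH _ _]; apply: nbx.
    * move=> w wN; rewrite setD0 => wV2.
      case: (boolP (w \in H)) => wH; last first.
        by exists x; rewrite ?in_setU1 ?eqxx // (notH w wN wH) nb_e // esymm.
      move: wV2; rewrite V2E wH /= negb_and negbK => /orP[/eqP->|wL].
        by exists x2; rewrite ?in_setU1 ?x2L ?orbT // nb_e // esymm.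
      by exists w; rewrite ?in_setU1 ?(negPn wL) ?orbT // nb_refl.
  + apply: leq_trans (IH V2 F3 lt2 Ok3); rewrite leq_exp2r //.
    apply: (part_le (X := [set r])) => D /memP3[Ds yD xD].
    have rD := P3f D (SP D Ds) yD xD.
    have LnD : forall l, l \in L2 -> l \notin D.
      move=> l lL; apply/negP => lD; have [w wN Hw] := sol_priv (SP D Ds) lD.
      have wV : w \in V by move: wN; rewrite NE => /andP[].
      have [_ erl _] := L2P l lL.
      move: (Hw r rD); rewrite eq_sym (negbTE (lnr l lL)).
      move: (Hw l lD); rewrite eqxx => /nbP[->|ewl]; first by rewrite nb_e // esymm.
      by rewrite (VL l w lL wV ltac:(by rewrite esymm)) nb_refl.
    split; first by rewrite sub1set.
    apply: (restrict (SP D Ds)); first by rewrite sub1set.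
    * apply/subsetP => u; rewrite in_setD1 => /andP[ur uD].
      have uV := sol_sub (SP D Ds) uD.
      rewrite V2E HE uV ur /= -andbA; apply/and3P; split.
      - by apply/negP => /eqP E; move: xD; rewrite -E uD.
      - by apply/negP => /eqP E; move: yD; rewrite -E uD.
      - by apply/negP => uL; move: (LnD u uL); rewrite uD.
    * by apply/subsetP => u; rewrite in_setD V2E => /andP[_ /and3P[/NH]].
    * move=> v u; rewrite in_setD F3E => /andP[H1 vV2] /set1P->.
      move: H1; rewrite vV2 /= => nerv; move: vV2; rewrite V2E => /and3P[_ vr _].
      apply/negP => /nbP[E|evr]; first by move: vr; rewrite E eqxx.
      by move: nerv; rewrite esymm evr.
    * move=> w wN; rewrite in_setD F3E negb_and negbK => H1; exists r; rewrite ?inE //.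
      case: (boolP (w \in H)) => wH; last by rewrite (notH w wN wH) nb_e.
      case: (boolP (w \in V2)) => wV2.
        by move: H1; rewrite wV2 /= orbF => erw; rewrite nb_e // esymm.
      move: wV2; rewrite V2E wH /= negb_and negbK => /orP[/eqP->|wL]; first exact: nb_refl.
      by have [_ erw _] := L2P w (negPn wL); rewrite nb_e // esymm.
  + by apply: fin_ar2; apply: pow_le.
Qed.

Lemma step (V F : {set T})
  (IH : forall V' F' : {set T}, #|V'| < #|V| -> Ok V' F' -> Bd V' F') : Ok V F -> Bd V F.
Proof.
move=> OkF; case: (set_0Vmem V) => [V0|[v0 v0V]].
  rewrite /Bd V0 cards0 expn0.
  have : #|sol set0 (set0 :\: F)| <= 1.
    rewrite -(cards1 (set0 : {set T})); apply: subset_leq_card; apply/subsetP => a /solP[a0 _ _].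
    by move: a0; rewrite subset0 => /eqP->; rewrite inE.
  by case: #|_| => [|[]].
case: (boolP [exists v in V, ~~ noniso V v]) => [/existsP[v /andP[vV nv]]|alln].
  exact: (case_iso IH OkF vV nv).
have nonis : forall v, v \in V -> noniso V v.
  move=> v vV; case: (boolP (noniso V v)) => // nv; case/negP: alln; apply/existsP; exists v.
  by rewrite vV nv.
have [x [y [[xV yV exy xleaf uniqnl] [Ff P1 P2]]]] :=
  config esymm eirr Hedge Hcont Hsz v0V (nonis v0 v0V).
have [FV F1 FI] := OkF.
have Fxy : forall f, f \in F -> f = x \/ f = y.
  by move=> f fF; have fV := subsetP FV f fF; apply: Ff => //; [exact: nonis | exact: FI].
case: (boolP (x \in F)) => xF; last first.
  apply: (case_support IH OkF xV yV exy xleaf uniqnl P1) => f fF.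
  by case: (Fxy f fF) => // E; move: xF; rewrite -E fF.
case: (boolP [exists l in leaves V y, l != x]) => [/existsP[l /andP[lL lx]]|noL].
  have [lV eyl ll] := leavesP lL.
  exact: (case_leaf5 IH OkF xF xV yV exy xleaf lV eyl ll lx).
have Lx : forall l, l \in leaves V y -> l = x.
  move=> l lL; apply/eqP/negPn/negP => lx; case/negP: noL; apply/existsP; exists l.
  by rewrite lL lx.
case: (boolP [exists r in V, e y r && (r != x)]) => [/existsP[r /and3P[rV eyr rx]]|nor].
  have rL : r \notin leaves V y by apply/negP => /Lx E; move: rx; rewrite E eqxx.
  have nlr := nonleafP rV eyr rL.
  apply: (case_hard IH OkF xF xV yV exy xleaf rV eyr rx nlr _ P1).
  move=> z zV eyz; case: (boolP (z \in leaves V y)) => zL; first by left; apply: Lx.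
  by right; apply: uniqnl => //; apply: nonleafP.
apply: (case_leaf6 IH OkF xF xV yV exy xleaf) => z zV eyz.
apply/eqP/negPn/negP => zx; case/negP: nor; apply/existsP; exists z.
by rewrite zV eyz zx.
Qed.

Lemma main_claim (V F : {set T}) : Ok V F -> Bd V F.
Proof.
move: {2}#|V| (leqnn #|V|) => n; elim: n V F => [|n IHn] V F Vn.
  by apply: step => V' F' lt; move: (leq_trans lt Vn).
apply: step => V' F' lt; apply: IHn; exact: leq_trans lt Vn.
Qed.

End Main.

End C.
Import C.

Lemma mdsE (T : finType) (e : rel T) D : (D \in mds e) = (D \in sol e setT (setT :\: set0)).
Proof.
rewrite /mds inE /minimal_dominating; apply/idP/idP.
- case/andP => dom /forallP minl; apply/solP; split; first exact: subsetT.
  + move=> v _; case: (boolP (v \in D)) => vD; first by exists v => //; apply: nbxx.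
    have /existsP[u /andP[uD evu]] := implyP (forallP dom v) vD.
    by exists u => //; rewrite /nb evu orbT.
  + move=> z zD; have := implyP (minl (D :\ z)).
    have pr : D :\ z \proper D by rewrite properD1.
    move=> /(_ pr); rewrite /dominating negb_forall => /existsP[w].
    rewrite negb_imply negb_exists => /andP[wD' /forallP H].
    exists w; first by rewrite !inE.
    move=> u uD; case: (eqVneq u z) => [->|uz].
      case: (eqVneq w z) => [->|wz]; first exact: nbxx.
      have wD : w \notin D by move: wD'; rewrite in_setD1 wz.
      have /existsP[u' /andP[u'D ewu']] := implyP (forallP dom w) wD.
      move: (H u'); rewrite in_setD1 u'D andbT ewu' andbT negbK => /eqP <-.
      by rewrite /nb ewu' orbT.
    have uD' : u \in D :\ z by rewrite in_setD1 uz uD.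
    move: (H u); rewrite uD' /= => newu; rewrite /nb (negbTE newu) orbF.
    by apply/negP => /eqP E; move: wD'; rewrite E uD'.
- case/solP => _ Hd Hp; apply/andP; split.
  + apply/forallP => v; apply/implyP => vD.
    have [u uD /orP[/eqP E|evu]] := Hd v ltac:(by rewrite !inE); first by move: vD; rewrite E uD.
    by apply/existsP; exists u; rewrite uD.
  + apply/forallP => D'; apply/implyP => /properP[D'D [z zD zD']].
    have [w _ Hw] := Hp z zD.
    apply/negP => dom'.
    case: (boolP (w \in D')) => wD'.
      by move: (Hw w (subsetP D'D w wD')); rewrite nbxx => /esym/eqP E; move: zD'; rewrite -E wD'.
    have /existsP[u /andP[uD' ewu]] := implyP (forallP dom' w) wD'.
    move: (Hw u (subsetP D'D u uD')); rewrite /nb ewu orbT => /esym/eqP E.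
    by move: zD'; rewrite -E uD'.
Qed.

Lemma part1 : forall (T : finType) (e : rel T), simple_graph e -> pathwidth_le e 1 ->
     #|mds e| ^ 2 <= 2 ^ #|T|.
Proof.
  move=> T e [esymm eirr] [s [[cov [edg cont]] wid]].
  have Hedge : forall u v, e u v -> exists i, (u \in nth set0 s i) && (v \in nth set0 s i).
    move=> u v /edg[Bg Bgs /andP[uB vB]]; exists (index Bg s).
    by rewrite nth_index // uB vB.
  have Hsz : forall i, #|nth set0 s i| <= 2.
    move=> i; case: (ltnP i (size s)) => H; first exact: (wid _ (mem_nth set0 H)).
    by rewrite nth_default // cards0.
  have := main_claim esymm eirr Hedge cont Hsz (Ok0 e s setT).
  rewrite /Bd cardsT; congr (_ <= _); congr (_ ^ _); apply: eq_card => D.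
  by rewrite mdsE.
Qed.

Lemma sgP2 : simple_graph P2.
Proof. by split => [i j|i]; rewrite /P2; [rewrite eq_sym | rewrite eqxx]. Qed.

Lemma pwP2 : pathwidth_le P2 1.
Proof.
exists [:: setT]; split; last by move=> B; rewrite inE => /eqP->; rewrite cardsT card_ord.
split; first by move=> v; exists setT; rewrite ?inE.
split; first by move=> u v _; exists setT; rewrite ?inE.
by move=> v [|i] [|j] [|k] //=.
Qed.

Lemma singP2 (i : 'I_2) : [set i] \in mds P2.
Proof.
rewrite mdsE; apply/solP; split; first exact: subsetT.
- move=> v _; exists i; rewrite ?inE //.
  by rewrite /nb /P2; case: (v == i).
- move=> z /set1P->; exists i; rewrite ?inE //.
  by move=> u /set1P->; rewrite nbxx eqxx.
Qed.

Theorem mainTheorem7 :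
  (forall (T : finType) (e : rel T), simple_graph e -> pathwidth_le e 1 ->
     #|mds e| ^ 2 <= 2 ^ #|T|) /\
  (simple_graph P2 /\ pathwidth_le P2 1 /\ #|mds P2| ^ 2 = 2 ^ #|'I_2|).
Proof.
split; first exact: part1.
split; first exact: sgP2.
split; first exact: pwP2.
have ub := part1 sgP2 pwP2.
have lb : 2 <= #|mds P2|.
  have c : #|[set [set (ord0 : 'I_2)]; [set ord_max]]| = 2.
    rewrite cards2; suff -> : [set (ord0 : 'I_2)] != [set ord_max] by [].
    by apply/negP => /eqP/setP/(_ ord0); rewrite !inE.
  apply: (@leq_trans #|[set [set (ord0 : 'I_2)]; [set ord_max]]|); first by rewrite c.
  apply: subset_leq_card; apply/subsetP => D; case/set2P => ->; exact: singP2.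
have c2 : 2 ^ #|'I_2| = 4 by rewrite card_ord.
rewrite c2 in ub *; move: ub lb; set m := #|mds P2|.
case: m => [|[|[|n]]] //.
by rewrite expnS expn1 => H; exfalso; move: H; clear; nia.
Qed.
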